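(* Let $n\ge1$ and let $f$ be an automorphism of the additive group $\mathbb{Z}^n$. Then: 1. If $f$ has a cycle of length $k$ other than the zero cycle $\{0\}$, then $f$ has infinitely many cycles of length $k$. 2. If $f$ has a chain, then $f$ has infinitely many chains. 3. If each standard basis vector $e_i$ ($1\le i\le n$) lies in a cycle of $f$, then every element of $\mathbb{Z}^n$ lies in a cycle of $f$, i.e., $f$ has no chains.
   Context: For a bijection $f$ of a set $A$, a cycle is a finite sequence $a_1,\dots,a_m$ of distinct elements with $f(a_j)=a_{j+1}$ for $j<m$ and $f(a_m)=a_1$ (length $m$); a chain is a two-sided infinite sequence $\dots,a_{-1},a_0,a_1,\dots$ of distinct elements with $f(a_j)=a_{j+1}$ for all $j$. Every element lies in exactly one cycle or chain. For an automorphism of $\mathbb{Z}^n$, the zero cycle is the fixed point $0$. $e_i\in\mathbb{Z}^n$ has $1$ in coordinate $i$ and $0$ elsewhere. *)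

(* Defs.v *)
From mathcomp Require Import all_boot all_order all_algebra.
Set Implicit Arguments. Unset Strict Implicit. Unset Printing Implicit Defensive.
Import GRing.Theory.
Local Open Scope ring_scope.

Notation Zn n := 'rV[int]_n.

Definition std_basis (n : nat) (i : 'I_n) : Zn n := delta_mx 0 i.

Definition is_group_aut (n : nat) (f : Zn n -> Zn n) : Prop :=
  (forall x y, f (x + y) = f x + f y) /\ bijective f.

Definition is_cycle (T : eqType) (f : T -> T) (k : nat) (c : seq T) : Prop :=
  (0 < k)%N /\ size c = k /\ uniq c /\ fcycle f c.

Definition is_chain (T : Type) (f : T -> T) (a : int -> T) : Prop :=
  injective a /\ (forall j, f (a j) = a (j + 1)).

(* Cycles / chains are identified when they have the same underlying set
   (i.e. up to rotation / shift of indices). *)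
Definition same_cycle (T : eqType) (c d : seq T) : Prop := c =i d.
Definition same_chain (T : Type) (a b : int -> T) : Prop :=
  forall x, (exists j, a j = x) <-> (exists j, b j = x).

Definition inf_many_cycles (T : eqType) (f : T -> T) (k : nat) : Prop :=
  forall (m : nat) (F : 'I_m -> seq T), (forall i, is_cycle f k (F i)) ->
    exists c, is_cycle f k c /\ forall i, ~ same_cycle c (F i).

Definition inf_many_chains (T : Type) (f : T -> T) : Prop :=
  forall (m : nat) (F : 'I_m -> int -> T), (forall i, is_chain f (F i)) ->
    exists a, is_chain f a /\ forall i, ~ same_chain a (F i).

Definition lies_in_cycle (T : eqType) (f : T -> T) (x : T) : Prop :=
  exists k c, is_cycle f k c /\ x \in c.

(* Main.v *)
Require Import Defs.
From mathcomp Require Import all_boot all_order all_algebra.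
From mathcomp Require Import zify.
From Stdlib Require Import Classical.
Set Implicit Arguments. Unset Strict Implicit. Unset Printing Implicit Defensive.
Import GRing.Theory Num.Theory.
Local Open Scope ring_scope.

Section Add.
Variable n : nat.
Variable g : 'rV[int]_n -> 'rV[int]_n.
Hypothesis gadd : forall x y, g (x + y) = g x + g y.

Lemma g0 : g 0 = 0.
Proof. have := gadd 0 0; rewrite addr0 => h; apply: (addrI (g 0)); by rewrite -h addr0. Qed.

Lemma gN x : g (- x) = - g x.
Proof. apply: (addrI (g x)); by rewrite -gadd !subrr g0. Qed.

Lemma gMn x N : g (x *+ N) = g x *+ N.
Proof. elim: N => [|N IH]; first by rewrite !mulr0n g0. by rewrite !mulrS gadd IH. Qed.

Lemma gMz x z : g (x *~ z) = g x *~ z.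
Proof. case: z => N; first exact: gMn. by rewrite !NegzE !mulrNz gN gMn. Qed.

Lemma gsum (F : 'I_n -> 'rV[int]_n) : g (\sum_(i < n) F i) = \sum_(i < n) g (F i).
Proof. exact: (big_morph g gadd g0). Qed.
End Add.

Lemma iter_add n (f : 'rV[int]_n -> 'rV[int]_n) (fadd : forall x y, f (x + y) = f x + f y) K x y :
  iter K f (x + y) = iter K f x + iter K f y.
Proof. elim: K => [|K IH] //=; by rewrite IH fadd. Qed.

Lemma iter_inj (T : Type) (f : T -> T) i : injective f -> injective (iter i f).
Proof. move=> fi; elim: i => [|i IH] //= x y /fi; exact: IH. Qed.

Lemma iter_mul_fix (T : Type) (f : T -> T) k q y : iter k f y = y -> iter (q * k) f y = y.
Proof. move=> h; elim: q => [|q IH] //; by rewrite mulSn iterD IH h. Qed.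

Lemma rowMn_inj n M : (0 < M)%N -> injective (fun y : 'rV[int]_n => y *+ M).
Proof.
move=> M0 y z /= h; apply/rowP => j.
have := congr1 (fun v : 'rV[int]_n => v 0 j) h; rewrite /= !mulmxnE => /eqP.
rewrite -subr_eq0 -mulrnBl mulrn_eq0 subr_eq0 => /orP [/eqP hM|/eqP //].
by rewrite hM in M0.
Qed.

Lemma fcycle_iter (T : eqType) (f : T -> T) (c : seq T) y :
  fcycle f c -> y \in c -> iter (size c) f y = y.
Proof.
move=> hc yc; rewrite -(size_rot (index y c)).
move: hc; rewrite -(rot_cycle (index y c)) (rot_index yc) /=.
set s := (drop _ _ ++ _). move/fpathP => [m hm].
have hs : size (rcons s y) = m by rewrite hm size_traject.
rewrite size_rcons in hs. rewrite -iterS hs.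
have := last_traject f y m; rewrite -hm last_rcons => h; by rewrite -h.
Qed.

Lemma period_cycle (T : eqType) (f : T -> T) (finj : injective f) K x :
  (0 < K)%N -> iter K f x = x -> lies_in_cycle f x.
Proof.
move=> K0 hK.
have ex : exists p, (0 < p)%N && (iter p f x == x) by exists K; rewrite K0 hK eqxx.
case: (ex_minnP ex) => p /andP[p0 /eqP hp] pmin.
case: p p0 hp pmin => [//|p'] _ hp pmin.
exists p'.+1, (traject f x p'.+1); split; last by rewrite trajectS mem_head.
split => //; split; first by rewrite size_traject.
split.
  rewrite looping_uniq; apply/negP => /trajectP [i hi heq].
  have e : iter p' f x = iter i f (iter (p' - i) f x) by rewrite -iterD subnKC // ltnW.
  rewrite e in heq; have h2 := iter_inj finj heq.
  have := pmin (p' - i)%N; rewrite h2 eqxx andbT subn_gt0 hi => /(_ isT).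
  move=> h3; lia.
have e : rcons (traject f (f x) p') x = traject f (f x) p'.+1 by rewrite trajectSr -iterSr hp.
by rewrite trajectS /= e fpath_traject.
Qed.

Lemma pick_fresh (A : Type) (R : A -> A -> Prop) (b : nat -> A) :
  (forall u v, R u v -> R v u) -> (forall u v w, R u v -> R v w -> R u w) ->
  (forall s s', (s < s')%N -> ~ R (b s) (b s')) ->
  forall m (F : 'I_m -> A), exists s, forall i, ~ R (b s) (F i).
Proof.
move=> Rsym Rtr bd.
have dist : forall s s', s != s' -> ~ R (b s) (b s').
  move=> s s'; case: (ltngtP s s') => // [h _|h _]; first exact: bd.
  by move=> /Rsym; apply: bd.
suff H : forall m (F : 'I_m -> A) (S : seq nat), uniq S -> (m < size S)%N ->
  exists2 s, s \in S & forall i, ~ R (b s) (F i).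
  move=> m F; have [||s _ hs] := H m F (iota 0 m.+1); [exact: iota_uniq | by rewrite size_iota |].
  by exists s.
elim=> [|m IH] F S uS szS.
  by case: S uS szS => // s S _ _; exists s; [rewrite mem_head | case].
pose F' := fun i : 'I_m => F (lift ord_max i).
case: (classic (exists2 s, s \in S & R (b s) (F ord_max))) => [[s0 hs0 hR]|hn].
  have := IH F' (rem s0 S) (rem_uniq _ uS); rewrite size_rem // => /(_ _).
  case=> [|s]; first by case: (size S) szS => //.
  rewrite (mem_rem_uniq _ uS) inE => /andP [ns0 sS] hs.
  exists s => // i; case: (unliftP ord_max i) => [j ->|->]; first exact: hs.
  move=> h; apply: (dist _ _ ns0); apply: Rtr h _; exact: Rsym.
have [|s sS hs] := IH F' S uS; first exact: ltnW.
exists s => // i; case: (unliftP ord_max i) => [j ->|->]; first exact: hs.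
by move=> h; apply: hn; exists s.
Qed.

Lemma part1 n (f : 'rV[int]_n -> 'rV[int]_n) (fadd : forall x y, f (x + y) = f x + f y)
  (finj : injective f) k c : is_cycle f k c -> c != [:: 0] -> inf_many_cycles f k.
Proof.
move=> [k0 [szc [uc cc]]] c0.
have [x xc x0] : exists2 x, x \in c & x != 0.
  case: c szc uc cc c0 => [/= szc|a t _ uc _ c0]; first by rewrite -szc in k0.
  case: (eqVneq a 0) => [a0|]; last by exists a; rewrite ?mem_head.
  case: t uc c0 => [|b t] uc c0; first by rewrite a0 eqxx in c0.
  exists b; first by rewrite !inE eqxx orbT.
  by move: uc => /= /andP [+ _]; rewrite inE a0 eq_sym => /norP [].
have [j xj] : exists j, x 0 j != 0.
  apply/existsP; apply: contraR x0 => /existsPn h; apply/eqP/rowP => j.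
  by rewrite mxE; move: (h j); rewrite negbK => /eqP.
move=> m F hF.
pose S := flatten [seq F i | i <- enum 'I_m].
pose L := [seq x *+ M | M <- iota 1 (size S).+1].
have uL : uniq L.
  rewrite map_inj_in_uniq ?iota_uniq // => M M' _ _ h.
  have := congr1 (fun v : 'rV[int]_n => v 0 j) h; rewrite /= !mulmxnE.
  exact: mulrIn.
have : ~~ all (mem S) L.
  apply/negP => /allP h; have := uniq_leq_size uL h.
  by rewrite size_map size_iota ltnn.
case/allPn => y /mapP [M hM ->] hy.
have M0 : (0 < M)%N by move: hM; rewrite mem_iota => /andP [].
exists (map (fun y => y *+ M) c); split.
  split => //; split; first by rewrite size_map.
  split; first by rewrite map_inj_uniq //; exact: rowMn_inj.
  rewrite cycle_map; rewrite (eq_cycle (e' := frel f)) // => a b /=.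
  rewrite (gMn fadd); apply/eqP/eqP => [h|->//]; exact: (rowMn_inj M0).
move=> i hs; move: (map_f (fun y => y *+ M) xc); rewrite hs => hin.
move/negP: hy; apply; apply/flattenP; exists (F i) => //.
by apply: map_f; rewrite mem_enum.
Qed.

Lemma part2 n (f : 'rV[int]_n -> 'rV[int]_n) (fadd : forall x y, f (x + y) = f x + f y)
  (a : int -> 'rV[int]_n) : is_chain f a -> inf_many_chains f.
Proof.
move=> [ainj ha] m F hF.
have [j0 aj0] : exists j0, a j0 != 0.
  case: (eqVneq (a 0) 0) => [h|h]; last by exists 0.
  exists 1; apply/eqP => h1; have : a 0 = a 1 by rewrite h h1.
  by move/ainj.
have [col xc] : exists col, a j0 0 col != 0.
  apply/existsP; apply: contraR aj0 => /existsPn h; apply/eqP/rowP => j.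
  by rewrite mxE; move: (h j); rewrite negbK => /eqP.
set c := a j0 0 col in xc.
pose P := (`|c|.+2)%N.
pose b := fun (s : nat) (j : int) => a j *+ (P ^ s)%N.
have bchain : forall s, is_chain f (b s).
  move=> s; split.
    move=> u v h; apply: ainj; apply: (@rowMn_inj n (P ^ s)%N _ _ _ h).
    by rewrite expn_gt0.
  by move=> j; rewrite /b (gMn fadd) ha.
have Rsym : forall u v : int -> 'rV[int]_n, same_chain u v -> same_chain v u.
  by move=> u v h x; split => H; [apply/(h x) | apply/(h x)].
have Rtr : forall u v w : int -> 'rV[int]_n, same_chain u v -> same_chain v w -> same_chain u w.
  by move=> u v w h1 h2 x; split => H; [apply/(h2 x)/(h1 x) | apply/(h1 x)/(h2 x)].
have bd : forall s s', (s < s')%N -> ~ same_chain (b s) (b s').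
  move=> s s' lt h.
  have [j hj] : exists j, b s' j = b s j0 by apply/(h (b s j0)); exists j0.
  have e2 : a j 0 col *+ (P ^ s')%N = c *+ (P ^ s)%N.
    by rewrite /c -(mulmxnE (a j)) -(mulmxnE (a j0)); move: hj; rewrite /b => ->.
  move: e2; rewrite -[a j 0 col *+ _]mulr_natr -[c *+ _]mulr_natr => /(congr1 absz); rewrite !abszM !natz !absz_nat.
  rewrite -(subnKC (ltnW lt)) expnD.
  have hP : (P <= P ^ (s' - s))%N.
    case e : (s' - s)%N => [|t]; first by move: lt; rewrite -subn_gt0 e.
    by rewrite expnS leq_pmulr // expn_gt0.
  have c0 : (0 < `|c|)%N by rewrite absz_gt0.
  have Ps : (0 < P ^ s)%N by rewrite expn_gt0.
  move: hP Ps; rewrite /P; move: (_ ^ (s' - s))%N (_ ^ s)%N (absz (a j 0 col)) => Q R d.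
  move=> hQ hR; case: (posnP d) => [->|d0]; first by rewrite mul0n => /esym/eqP; rewrite muln_eq0 (gtn_eqF c0) (gtn_eqF hR).
  have h1 : (R * (`|c|.+2) <= d * (R * Q))%N.
    by rewrite mulnA; apply: leq_mul => //; exact: leq_pmull.
  move=> e; rewrite e in h1; nia.
have [s hs] := pick_fresh Rsym Rtr bd F.
by exists (b s); split.
Qed.

Lemma part3 n (f : 'rV[int]_n -> 'rV[int]_n) (fadd : forall x y, f (x + y) = f x + f y) :
  (forall i : 'I_n, lies_in_cycle f (std_basis i)) ->
  exists2 K, (0 < K)%N & forall x, iter K f x = x.
Proof.
move=> hb.
have : forall s : seq 'I_n, exists2 K, (0 < K)%N &
    forall i, i \in s -> iter K f (std_basis i) = std_basis i.
  elim=> [|i s [K K0 hK]]; first by exists 1%N.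
  have [k [c [[k0 [szc [_ cc]]] ic]]] := hb i.
  have hi := fcycle_iter cc ic; rewrite szc in hi.
  exists (K * k)%N; first by rewrite muln_gt0 K0 k0.
  move=> j; rewrite inE => /orP [/eqP ->|js]; first exact: iter_mul_fix.
  rewrite mulnC; apply: iter_mul_fix; exact: hK.
case/(_ (enum 'I_n)) => K K0 hK; exists K => // x.
rewrite {1}(row_sum_delta x) (gsum (iter_add fadd K)); symmetry.
rewrite {1}(row_sum_delta x); apply: eq_bigr => j _.
rewrite -[x 0 j]intz !scaler_int (gMz (iter_add fadd K)).
by have := hK j; rewrite mem_enum /std_basis => ->.
Qed.

Theorem proposition3p1 (n : nat) (f : 'rV[int]_n -> 'rV[int]_n) :
  (0 < n)%N -> is_group_aut f ->
  [/\ (forall (k : nat) (c : seq 'rV[int]_n),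
         is_cycle f k c -> c != [:: 0] -> inf_many_cycles f k),
      ((exists a : int -> 'rV[int]_n, is_chain f a) -> inf_many_chains f)
    & ((forall i : 'I_n, lies_in_cycle f (std_basis i)) ->
         (forall x : 'rV[int]_n, lies_in_cycle f x) /\
         (forall a : int -> 'rV[int]_n, ~ is_chain f a))].
Proof.
move=> n0 [fadd fbij]; have finj := bij_inj fbij.
split.
- move=> k c hc c0; exact: (part1 fadd finj hc c0).
- by case=> a ha; exact: (part2 fadd ha).
- move=> hb; have [K K0 hK] := part3 fadd hb; split.
    move=> x; exact: (period_cycle finj K0 (hK x)).
  move=> a [ainj ha].
  have it : forall N, iter N f (a 0) = a N%:Z.
    elim => [|N IH] //=; by rewrite IH ha -PoszD addn1.
  have := it K; rewrite hK => /ainj e; lia.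
Qed.
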